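(* Let $P$ be a finite poset, $r,s$ positive integers, and $\theta$ a cyclic permutation of $\mathbf{F}_0\cup\mathbf{F}_1$. For every $p\in P$, the statistic $T_p^+-\frac{r}{s}T_p^-$, viewed as a statistic on $\mathcal{J}_{r,s}(P)$, is $0$-mesic under the $q$-rowmotion operator $\rho\colon\mathcal{J}_{r,s}(P)\to\mathcal{J}_{r,s}(P)$.
   Context: $\mathbf{F}_0$ and $\mathbf{F}_1$ are disjoint sets with $\#\mathbf{F}_0=s$, $\#\mathbf{F}_1=r$, and $\theta$ is a permutation of $\mathbf{F}_0\cup\mathbf{F}_1$ consisting of a single cycle of length $r+s$. $\mathcal{J}_{r,s}(P)$ is the set of labelings $L\colon P\to\mathbf{F}_0\cup\mathbf{F}_1$ such that $L^{-1}(\mathbf{F}_0)$ is an order ideal of $P$. An element $x$ is active in $L$ if $x$ is maximal in $L^{-1}(\mathbf{F}_0)$ or minimal in $L^{-1}(\mathbf{F}_1)$. The toggle $\tau_p$ on $\mathcal{J}_{r,s}(P)$ replaces the label $L(p)$ by $\theta(L(p))$ if $p$ is active in $L$, and does nothing otherwise; all other labels are unchanged. $q$-rowmotion is $\rho=\tau_{p_1}\circ\cdots\circ\tau_{p_n}$ for any linear extension $p_1,\dots,p_n$ of $P$. For an order ideal $I$ of $P$: $T_p^+(I)=1$ if $p$ is minimal in $P\setminus I$, else $0$; $T_p^-(I)=1$ if $p$ is maximal in $I$, else $0$; a statistic $g$ on order ideals is viewed on $\mathcal{J}_{r,s}(P)$ via $g(L)\coloneqq g(L^{-1}(\mathbf{F}_0))$.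 A statistic is $c$-mesic under an invertible map of a finite set if its average over every orbit equals $c$. *)

(* Defs.v *)
From mathcomp Require Import all_boot all_order all_algebra all_fingroup.
Set Implicit Arguments. Unset Strict Implicit. Unset Printing Implicit Defensive.
Import Order.TTheory GRing.Theory.
Local Open Scope order_scope.

Section QRowmotion.
Variables (d : Order.disp_t) (P : finPOrderType d) (Lab : finType).

Definition preim_set (F : {set Lab}) (L : {ffun P -> Lab}) : {set P} :=
  [set x | L x \in F].

Definition is_order_ideal (I : {set P}) : bool :=
  [forall x, forall y, ((x \in I) && (y <= x)) ==> (y \in I)].

Definition Jrs (F0 : {set Lab}) : {set {ffun P -> Lab}} :=
  [set L | is_order_ideal (preim_set F0 L)].

Definition maximal_in (S : {set P}) (x : P) : bool :=
  (x \in S) && [forall y, (y \in S) ==> ~~ (x < y)].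
Definition minimal_in (S : {set P}) (x : P) : bool :=
  (x \in S) && [forall y, (y \in S) ==> ~~ (y < x)].

Definition active (F0 F1 : {set Lab}) (L : {ffun P -> Lab}) (x : P) : bool :=
  maximal_in (preim_set F0 L) x || minimal_in (preim_set F1 L) x.

Definition toggle (F0 F1 : {set Lab}) (theta : {perm Lab}) (p : P)
    (L : {ffun P -> Lab}) : {ffun P -> Lab} :=
  if active F0 F1 L p then [ffun x => if x == p then theta (L x) else L x]
  else L.

Definition linear_extension (s : seq P) : Prop :=
  [/\ uniq s, forall x, x \in s &
      forall x y, x < y -> (index x s < index y s)%N].

Definition rowmotion (F0 F1 : {set Lab}) (theta : {perm Lab}) (s : seq P)
    (L : {ffun P -> Lab}) : {ffun P -> Lab} :=
  foldr (fun p M => toggle F0 F1 theta p M) L s.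

Definition Tplus (I : {set P}) (p : P) : rat :=
  (((p \notin I) && [forall q, (q < p) ==> (q \in I)]) : nat)%:R.
Definition Tminus (I : {set P}) (p : P) : rat :=
  (((p \in I) && [forall q, (p < q) ==> (q \notin I)]) : nat)%:R.

End QRowmotion.

Definition single_cycle (Lab : finType) (theta : {perm Lab}) : Prop :=
  forall x, #|porbit theta x| = #|Lab|.

Arguments preim_set {d P Lab} F L.
Arguments is_order_ideal {d P} I.
Arguments Jrs {d P Lab} F0.
Arguments maximal_in {d P} S x.
Arguments minimal_in {d P} S x.
Arguments active {d P Lab} F0 F1 L x.
Arguments toggle {d P Lab} F0 F1 theta p L.
Arguments linear_extension {d P} s.
Arguments rowmotion {d P Lab} F0 F1 theta s L.
Arguments Tplus {d P} I p.
Arguments Tminus {d P} I p.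

(* Main.v *)
Require Import Defs.
From mathcomp Require Import all_boot all_order all_algebra all_fingroup.
From mathcomp Require Import ring.
Import Order.TTheory GRing.Theory Num.Theory.
Set Implicit Arguments. Unset Strict Implicit.
Local Open Scope order_scope.

Lemma F1E (Lab : finType) (F0 F1 : {set Lab}) :
  [disjoint F0 & F1] -> F0 :|: F1 = setT -> forall l, (l \in F1) = (l \notin F0).
Proof.
move=> dis cov l; have := in_setT l; rewrite -cov inE.
case: (boolP (l \in F0)) => h /=; last by move=> ->.
by move=> _; move: dis; rewrite disjoint_subset => /subsetP/(_ l h); rewrite inE => /negbTE.
Qed.

Lemma activeE d (P : finPOrderType d) (Lab : finType) (F0 F1 : {set Lab})
  (M : {ffun P -> Lab}) x :
  [disjoint F0 & F1] -> F0 :|: F1 = setT ->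
  active F0 F1 M x = ((M x \in F0) && [forall y, (M y \in F0) ==> ~~ (x < y)])
    || ((M x \notin F0) && [forall y, (M y \notin F0) ==> ~~ (y < x)]).
Proof.
move=> dis cov; have E := F1E dis cov; rewrite /active /maximal_in /minimal_in /preim_set !inE E.
congr (_ && _ || _ && _); apply: eq_forallb => y; by rewrite inE ?E.
Qed.

Lemma idealP d (P : finPOrderType d) (Lab : finType) (F0 : {set Lab})
  (L : {ffun P -> Lab}) :
  reflect (forall a b, L a \in F0 -> b <= a -> L b \in F0) (L \in Jrs F0).
Proof.
rewrite inE /is_order_ideal; apply: (iffP forallP) => [H a b Ha Hb|H a].
  by have /forallP /(_ b) := H a; rewrite !inE Ha Hb /= => ->.
by apply/forallP => b; apply/implyP; rewrite !inE => /andP[? ?]; apply: (H a).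
Qed.

Lemma toggle_other d (P : finPOrderType d) (Lab : finType) (F0 F1 : {set Lab})
  th p (M : {ffun P -> Lab}) x : x != p -> toggle F0 F1 th p M x = M x.
Proof. by move=> /negbTE h; rewrite /toggle; case: ifP => // _; rewrite ffunE h. Qed.

Lemma toggle_self d (P : finPOrderType d) (Lab : finType) (F0 F1 : {set Lab})
  th p (M : {ffun P -> Lab}) :
  toggle F0 F1 th p M p = if active F0 F1 M p then th (M p) else M p.
Proof. by rewrite /toggle; case: ifP => // _; rewrite ffunE eqxx. Qed.

Lemma foldr_notin d (P : finPOrderType d) (Lab : finType) (F0 F1 : {set Lab})
  th s (M : {ffun P -> Lab}) x : x \notin s -> rowmotion F0 F1 th s M x = M x.
Proof.
elim: s => //= q s IH; rewrite inE negb_or => /andP[hq hs].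
by rewrite toggle_other ?IH // eq_sym.
Qed.

Lemma toggle_Jrs d (P : finPOrderType d) (Lab : finType) (F0 F1 : {set Lab})
  th p (M : {ffun P -> Lab}) : [disjoint F0 & F1] -> F0 :|: F1 = setT ->
  M \in Jrs F0 -> toggle F0 F1 th p M \in Jrs F0.
Proof.
move=> dis cov /idealP HM; rewrite /toggle; case: ifP => act; last by apply/idealP.
apply/idealP => a b; rewrite !ffunE.
move: act; rewrite activeE // => /orP[] /andP[h0 /forallP h1].
  case: eqP => [->|/eqP ap]; case: eqP => [->|/eqP bp] //.
  - by move=> ? ?; apply: HM h0 _.
  - move=> Ha pa; have : p < a by rewrite lt_neqAle eq_sym ap.
    by move: (h1 a); rewrite Ha /= => /negbTE ->.
  - exact: HM.
case: eqP => [->|/eqP ap]; case: eqP => [->|/eqP bp] //.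
- move=> _ bp'; have bp2 : b < p by rewrite lt_neqAle bp.
  by apply/negPn/negP => Hb; move: (h1 b); rewrite Hb bp2.
- by move=> Ha pa; move: (HM _ _ Ha pa); rewrite (negbTE h0).
- exact: HM.
Qed.

Lemma active_toggle d (P : finPOrderType d) (Lab : finType) (F0 F1 : {set Lab})
  th p (M : {ffun P -> Lab}) : [disjoint F0 & F1] -> F0 :|: F1 = setT ->
  M \in Jrs F0 -> active F0 F1 (toggle F0 F1 th p M) p = active F0 F1 M p.
Proof.
move=> dis cov /idealP HM; rewrite /toggle; case: ifP => act //.
apply/idP; rewrite activeE // !ffunE eqxx.
have E y : y != p -> [ffun x => if x == p then th (M x) else M x] y = M y.
  by move=> /negbTE yp; rewrite ffunE yp.
move: act; rewrite activeE // => /orP[] /andP[h0 /forallP h1].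
  case: (boolP (th (M p) \in F0)) => hth.
    apply/orP; left => /=.
    apply/forallP => y; case: (eqVneq y p) => [->|yp]; first by rewrite ltxx implybT.
    by rewrite E //; exact: h1.
  apply/orP; right => /=.
  apply/forallP => y; case: (eqVneq y p) => [->|yp]; first by rewrite ltxx implybT.
  rewrite E //; apply/implyP => hy; apply/negP => yp'.
  by move: hy; rewrite (HM _ _ h0 (ltW yp')).
case: (boolP (th (M p) \in F0)) => hth.
  apply/orP; left => /=.
  apply/forallP => y; case: (eqVneq y p) => [->|yp]; first by rewrite ltxx implybT.
  rewrite E //; apply/implyP => hy; apply/negP => py.
  by move: h0; rewrite (HM _ _ hy (ltW py)).
apply/orP; right => /=.
apply/forallP => y; case: (eqVneq y p) => [->|yp]; first by rewrite ltxx implybT.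
by rewrite E //; exact: h1.
Qed.

Lemma toggle_inj d (P : finPOrderType d) (Lab : finType) (F0 F1 : {set Lab})
  th p (M1 M2 : {ffun P -> Lab}) : [disjoint F0 & F1] -> F0 :|: F1 = setT ->
  M1 \in Jrs F0 -> M2 \in Jrs F0 ->
  toggle F0 F1 th p M1 = toggle F0 F1 th p M2 -> M1 = M2.
Proof.
move=> dis cov J1 J2 eq12.
have ea : active F0 F1 M1 p = active F0 F1 M2 p.
  by rewrite -(active_toggle th p dis cov J1) -(active_toggle th p dis cov J2) eq12.
move: eq12; rewrite /toggle -ea; case: ifP => // _ eq12.
apply/ffunP => x; have := congr1 (fun f : {ffun P -> Lab} => f x) eq12.
by rewrite /= !ffunE; case: eqP => // _; apply: perm_inj.
Qed.

Lemma row_Jrs d (P : finPOrderType d) (Lab : finType) (F0 F1 : {set Lab})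
  th s (M : {ffun P -> Lab}) : [disjoint F0 & F1] -> F0 :|: F1 = setT ->
  M \in Jrs F0 -> rowmotion F0 F1 th s M \in Jrs F0.
Proof. by move=> dis cov J; elim: s => //= x s IH; apply: toggle_Jrs. Qed.

Lemma row_inj d (P : finPOrderType d) (Lab : finType) (F0 F1 : {set Lab})
  th s (M1 M2 : {ffun P -> Lab}) : [disjoint F0 & F1] -> F0 :|: F1 = setT ->
  M1 \in Jrs F0 -> M2 \in Jrs F0 ->
  rowmotion F0 F1 th s M1 = rowmotion F0 F1 th s M2 -> M1 = M2.
Proof.
move=> dis cov J1 J2; elim: s => //= x s IH eq12; apply: IH.
by apply: (toggle_inj dis cov _ _ eq12); apply: row_Jrs.
Qed.

Lemma row_inv d (P : finPOrderType d) (Lab : finType) (F0 F1 : {set Lab})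
  th s (M : {ffun P -> Lab}) p : [disjoint F0 & F1] -> F0 :|: F1 = setT ->
  p \notin s -> M p \notin F0 -> (forall q, p < q -> M q \notin F0) ->
  forall q, p < q -> rowmotion F0 F1 th s M q \notin F0.
Proof.
move=> dis cov; elim: s => [|x s IH] //= ps Mp Mq q pq.
move: ps; rewrite inE negb_or => /andP[px ps].
have IH' := IH ps Mp Mq.
case: (eqVneq q x) => [qx|qx]; last by rewrite toggle_other //; exact: IH'.
subst q; rewrite toggle_self.
suff -> : active F0 F1 (rowmotion F0 F1 th s M) x = false by exact: IH'.
rewrite activeE // (negbTE (IH' x pq)) /=.
apply/negP => /forallP /(_ p); rewrite foldr_notin // Mp pq //.
Qed.

Lemma step d (P : finPOrderType d) (Lab : finType) (F0 F1 : {set Lab})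
  th ext (L : {ffun P -> Lab}) p : [disjoint F0 & F1] -> F0 :|: F1 = setT ->
  linear_extension ext -> L \in Jrs F0 ->
  exists adv : bool,
   [/\ rowmotion F0 F1 th ext L p = (if adv then th (L p) else L p),
     (p \notin preim_set F0 L) && [forall q, (q < p) ==> (q \in preim_set F0 L)]
       = adv && (L p \notin F0) &
     (p \in preim_set F0 (rowmotion F0 F1 th ext L)) &&
       [forall q, (p < q) ==> (q \notin preim_set F0 (rowmotion F0 F1 th ext L))]
       = adv && (th (L p) \in F0)].
Proof.
move=> dis cov [uext inext idx] J.
move: (inext p) uext idx => /splitPr [s1 s2] uext idx.
move: (uext); rewrite cat_uniq /= => /and3P[_ hs /andP[ps2 _]].
move: hs; rewrite negb_or => /andP[ps1 hs].
have notin1 q : q \in s2 -> q \notin s1.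
  by move=> qs; apply: contra hs => h; apply/hasP; exists q.
have Hlt q : q < p -> q \notin s2.
  move=> qp; apply/negP => qs; have := idx _ _ qp.
  rewrite !index_cat (negbTE ps1) (negbTE (notin1 _ qs)) /= eqxx.
  by rewrite eq_sym (lt_eqF qp) addn0 -[X in (_ < X)%N]addn0 ltn_add2l.
have Hgt q : p < q -> q \notin s1.
  move=> pq; apply/negP => qs; have := idx _ _ pq.
  rewrite !index_cat (negbTE ps1) qs /= eqxx addn0.
  by rewrite ltnNge ltnW // index_mem.
set M := rowmotion F0 F1 th s2 L.
have RE : rowmotion F0 F1 th (s1 ++ p :: s2) L = rowmotion F0 F1 th s1 (toggle F0 F1 th p M).
  by rewrite /rowmotion foldr_cat.
set L' := rowmotion F0 F1 th (s1 ++ p :: s2) L.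
have Mp : M p = L p by rewrite /M foldr_notin.
have Mlt q : q < p -> M q = L q by move=> qp; rewrite /M foldr_notin // Hlt.
have Mgt q : p < q -> L' q = M q.
  move=> pq; rewrite /L' RE foldr_notin ?Hgt // toggle_other // gt_eqF //.
have L'p : L' p = if active F0 F1 M p then th (L p) else L p.
  by rewrite /L' RE foldr_notin // toggle_self Mp.
set A := [forall y, (p < y) ==> (L' y \notin F0)].
set B := [forall y, (y < p) ==> (L y \in F0)].
have advE : active F0 F1 M p = (L p \in F0) && A || (L p \notin F0) && B.
  rewrite activeE // Mp; congr (_ && _ || _ && _); apply: eq_forallb => y.
    by case py: (p < y); rewrite /= ?implybT // implybF Mgt.
  by case yp: (y < p); rewrite /= ?implybT // Mlt // implybF negbK.
exists (active F0 F1 M p); split => //.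
  have -> : [forall q, (q < p) ==> (q \in preim_set F0 L)] = B.
    by apply: eq_forallb => y; rewrite inE.
  by rewrite inE advE; case: (L p \in F0); rewrite /= ?andbF ?andbT.
have -> : [forall q, (p < q) ==> (q \notin preim_set F0 L')] = A.
  by apply: eq_forallb => y; rewrite inE.
rewrite inE L'p; case: ifP => adv.
  case: (th (L p) \in F0) => //=.
  move: adv; rewrite advE; case: (boolP (L p \in F0)) => Lp0 /= HB; first by rewrite orbF in HB.
  apply/forallP => q; apply/implyP => pq; rewrite Mgt //.
  apply: (row_inv th (M:=L) dis cov ps2 Lp0) => //.
  move=> q' pq'; apply/negP => h; move/idealP: J => J.
  by move: Lp0; rewrite (J _ _ h (ltW pq')).
by apply/negbTE; move: adv; rewrite advE => /negbT; rewrite negb_or => /andP[].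
Qed.

Local Open Scope ring_scope.

Lemma sum_traject (T : Type) (V : nmodType) (f : T -> T) x n (F : T -> V) :
  \sum_(y <- traject f x n) F y = \sum_(0 <= i < n) F (iter i f x).
Proof.
rewrite (big_nth x) size_traject; apply: eq_big_nat => i /andP[_ hi].
by rewrite nth_traject.
Qed.

Lemma exists_g (Lab : finType) (th : {perm Lab}) (h : Lab -> rat) :
  single_cycle th -> \sum_l h l = 0 ->
  exists g : Lab -> rat, forall l, g (th l) - g l = h l.
Proof.
move=> sc hsum; case: (pickP (@predT Lab)) => [l0 _|none]; last first.
  by exists (fun _ => 0) => l; have := none l.
set n := #|Lab|; set t := traject th l0 n.
have Ut : uniq t by rewrite /t /n -(sc l0) uniq_traject_porbit.
have itn : iter n th l0 = l0 by rewrite /n -(sc l0) iter_porbit.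
have n0 : (0 < n)%N by rewrite /n -(sc l0) lt0n card_porbit_neq0.
have memt y : y \in t.
  apply/negPn/negP => ny; have := max_card [predU1 y & mem t].
  by rewrite cardU1 ny (card_uniqP Ut) size_traject /= ltnn.
have tot : \sum_(0 <= i < n) h (iter i th l0) = 0.
  rewrite -sum_traject -/t -[RHS]hsum; apply: perm_big.
  by apply: uniq_perm => //; [exact: index_enum_uniq | move=> y; rewrite mem_index_enum memt].
exists (fun y => \sum_(0 <= i < index y t) h (iter i th l0)) => y.
have jn : (index y t < n)%N by rewrite -[X in (_ < X)%N](size_traject th l0 n) index_mem.
have yE : y = iter (index y t) th l0.
  by rewrite -(nth_traject _ jn) -/t nth_index.
set j := index y t in jn yE *.
have -> : th y = iter j.+1 th l0 by rewrite yE.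
case: (ltnP j.+1 n) => hj.
  have -> : index (iter j.+1 th l0) t = j.+1.
    by rewrite -(nth_traject _ hj) index_uniq // size_traject.
  by rewrite big_nat_recr //= -yE addrAC subrr add0r.
have jE : j.+1 = n by apply/eqP; rewrite eqn_leq hj jn.
rewrite jE itn.
have -> : index l0 t = 0%N by rewrite /t; case: (n) n0 => //= k _; rewrite eqxx.
rewrite big_geq // sub0r; move: tot; rewrite -jE big_nat_recr //= -yE => /eqP.
by rewrite addr_eq0 => /eqP ->; rewrite opprK.
Qed.

Unset Implicit Arguments.

Theorem lemma5p4 (d : Order.disp_t) (P : finPOrderType d) (Lab : finType)
    (F0 F1 : {set Lab}) (r s : nat) (theta : {perm Lab}) (ext : seq P) (p : P) :
  (0 < r)%N -> (0 < s)%N ->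
  [disjoint F0 & F1] -> F0 :|: F1 = [set: Lab] ->
  #|F0| = s -> #|F1| = r ->
  single_cycle theta ->
  linear_extension ext ->
  forall L : {ffun P -> Lab}, L \in Jrs F0 ->
    let O := fingraph.orbit (rowmotion F0 F1 theta ext) L in
    (\sum_(M <- O)
        (Tplus (preim_set F0 M) p - (r%:R / s%:R) * Tminus (preim_set F0 M) p))
      / (size O)%:R = 0.
Proof.
move=> r0 s0 dis cov cF0 cF1 sc lin L J O.
set c : rat := r%:R / s%:R.
set h : Lab -> rat := fun l => (l \notin F0)%:R - c * (theta l \in F0)%:R.
have E := F1E dis cov.
have hsum : \sum_l h l = 0.
  rewrite /h sumrB -mulr_sumr.
  have e : \sum_l ((l \in F0)%:R : rat) = \sum_l ((theta l \in F0)%:R) := reindex_perm theta.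
  rewrite -e.
  have cnt (b : pred Lab) : \sum_l ((b l)%:R : rat) = #|b|%:R.
    rewrite -natr_sum -sum1_card [in RHS]big_mkcond; congr (_%:R); apply: eq_bigr => i _; rewrite unfold_in; case: (b i).
  rewrite !cnt.
  have -> : #|[pred l | l \notin F0]| = r by rewrite -cF1; apply: eq_card => l; rewrite inE E.
  have -> : #|[pred l | l \in F0]| = s by rewrite -cF0; apply: eq_card => l.
  by rewrite /c divfK ?subrr // pnatr_eq0 -?lt0n.
have [g hg] := exists_g sc hsum.
set f := rowmotion F0 F1 theta ext.
have f_in : {homo f : x / x \in Jrs F0} by move=> x; apply: row_Jrs.
have injf : {in Jrs F0 &, injective f} by move=> x y Jx Jy; apply: row_inj.
have itN := iter_order_in f_in injf J.
have Jit k : iter k f L \in Jrs F0 by elim: k => //= k IH; apply: f_in.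
suff -> : \sum_(M <- O) (Tplus (preim_set F0 M) p - c * Tminus (preim_set F0 M) p) = 0.
  by rewrite mul0r.
rewrite /O /fingraph.orbit sum_traject.
rewrite (telescope_sumr_eq (fun k => c * Tminus (preim_set F0 (iter k f L)) p
                                     + g (iter k f L p)) _ (leq0n _)).
  by rewrite itN subrr.
move=> k _.
have [adv [e1 e2 e3]] := step theta p dis cov lin (Jit k).
rewrite /= -/f in e1 e3 *.
rewrite /Tplus /Tminus e2 e3 e1.
clear e2 e3; case: adv e1 => e1 /=.
  have H := hg (iter k f L p).
  rewrite -[g (theta _)](subrK (g (iter k f L p))) H /h.
  ring.
ring.
Qed.
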